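(* Let $s$ be a positive integer and let $f_1,f_2,f_3\colon[s]^2\to\mathbb{Z}$ be strongly monotone functions. Define $f\colon[s]^3\to\mathbb{Z}^3$ by $f(x,y,z)=\bigl(f_1(x,y),f_2(x,z),f_3(y,z)\bigr)$. Then $f$ takes at least $s^2/6$ distinct values on $[s]^3$.
   Context: $[s]=\{1,\dots,s\}$. A function $g$ of two variables is strongly monotone if $g(x,y)\leq g(x',y)$, $g(x,y)\leq g(x,y')$ and $g(x,y)<g(x',y')$ whenever $x<x'$ and $y<y'$. *)

(* Defs.v *)
From mathcomp Require Import all_boot all_order all_algebra.
Set Implicit Arguments. Unset Strict Implicit. Unset Printing Implicit Defensive.

(* [s] = {1,...,s} is represented by 'I_s = {0,...,s-1} (order-preserving shift
   by one; strong monotonicity only depends on the order). *)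

Definition strongly_monotone (s : nat) (g : 'I_s -> 'I_s -> int) : Prop :=
  forall x x' y y' : 'I_s,
    ((x < x')%N -> (g x y <= g x' y)%R) /\
    ((y < y')%N -> (g x y <= g x y')%R) /\
    ((x < x')%N -> (y < y')%N -> (g x y < g x' y')%R).

Definition fmap3 (s : nat) (f1 f2 f3 : 'I_s -> 'I_s -> int)
  (x y z : 'I_s) : int * int * int := (f1 x y, f2 x z, f3 y z).

Definition num_values (s : nat) (f1 f2 f3 : 'I_s -> 'I_s -> int) : nat :=
  size (undup (flatten [seq [seq fmap3 f1 f2 f3 x y z
                       | y <- enum 'I_s, z <- enum 'I_s] | x <- enum 'I_s])).

(* Main.v *)
Require Import Defs.
From mathcomp Require Import all_boot all_order all_algebra zify.
Set Implicit Arguments. Unset Strict Implicit. Unset Printing Implicit Defensive.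

Lemma sum_count_uniq (T : eqType) (u l : seq T) :
  uniq u -> all (mem u) l -> \sum_(v <- u) count_mem v l = size l.
Proof.
move=> Uu; elim: l => [|a l IH] /=.
  by rewrite big1.
move=> /andP[au al].
rewrite (eq_bigr (fun v => (a == v) + count_mem v l)) // big_split /= IH //.
have := count_uniq_mem a Uu; rewrite au => ca.
rewrite -add1n; congr (_ + _).
rewrite -[1]ca -sum1_count.
idtac.
rewrite [RHS]big_mkcond; apply: eq_bigr => v _.
by rewrite /= eq_sym; case: (_ == _).
Qed.

Lemma size_le_undup (T : eqType) (l : seq T) B :
  (forall v, count_mem v l <= B) -> size l <= size (undup l) * B.
Proof.
move=> H.
have E := @sum_count_uniq _ (undup l) l (undup_uniq l).
rewrite -{1}E; last by apply/allP => x; rewrite /= mem_undup.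
elim: (undup l) => [|a u IH]; first by rewrite big_nil.
by rewrite big_cons /= mulSn leq_add.
Qed.

Definition G3 s (f1 f2 f3 : 'I_s -> 'I_s -> int) (p : 'I_s * 'I_s * 'I_s) :=
  fmap3 f1 f2 f3 p.1.1 p.1.2 p.2.

Lemma count_fib s (f1 f2 f3 : 'I_s -> 'I_s -> int) v :
  count_mem v (flatten [seq [seq fmap3 f1 f2 f3 x y z
                       | y <- enum 'I_s, z <- enum 'I_s] | x <- enum 'I_s])
  = #|[set p | G3 f1 f2 f3 p == v]|.
Proof.
rewrite -sum1_count big_flatten /= big_map.
rewrite -sum1_card [RHS]big_mkcond /=.
rewrite (eq_bigr (fun x => \sum_(y <- enum 'I_s) \sum_(z <- enum 'I_s) ((fmap3 f1 f2 f3 x y z == v):nat))); last first.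
  move=> x _; rewrite big_mkcond big_allpairs_dep /=.
  by apply: eq_bigr => y _; apply: eq_bigr => z _; case: (_ == _).
rewrite [RHS](eq_bigr (fun p => ((G3 f1 f2 f3 p == v) : nat))); last first.
  by move=> p _; rewrite inE; case: (_ == _).
have -> : \sum_(i <- enum 'I_s)
     \sum_(y <- enum 'I_s) \sum_(z <- enum 'I_s) ((fmap3 f1 f2 f3 i y z == v) : nat) =
   \sum_i \sum_y \sum_z ((fmap3 f1 f2 f3 i y z == v) : nat).
  rewrite big_enum /=; apply: eq_bigr => x _; rewrite big_enum /=; apply: eq_bigr => y _.
  by rewrite big_enum.
rewrite pair_bigA /= pair_bigA /=.
by [].
Qed.

Lemma sm_not s (g : 'I_s -> 'I_s -> int) a b a' b' :
  strongly_monotone g -> g a b = g a' b' -> (a < a')%N -> (b < b')%N -> False.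
Proof.
move=> H E h1 h2; have := (H a a' b b').2.2 h1 h2.
by rewrite E Order.POrderTheory.ltxx.
Qed.

Lemma eq_of_sm s (g : 'I_s -> 'I_s -> int) (a b a' b' : 'I_s) :
  strongly_monotone g -> g a b = g a' b' ->
  (a + (s - b) = a' + (s - b'))%N -> a = a' /\ b = b'.
Proof.
move=> H E E2.
have ha := ltn_ord a; have hb := ltn_ord b; have ha' := ltn_ord a'; have hb' := ltn_ord b'.
case: (ltngtP a a') => c.
- exfalso; apply: (sm_not H E c); lia.
- exfalso; apply: (sm_not H (esym E) c); lia.
- split; apply: val_inj => //=; lia.
Qed.

Lemma fiber_bound s (f1 f2 f3 : 'I_s -> 'I_s -> int) v :
  strongly_monotone f1 -> strongly_monotone f2 -> strongly_monotone f3 ->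
  (#|[set p | G3 f1 f2 f3 p == v]| <= (2 * s).+1 + (2 * s).+1)%N.
Proof.
move=> H1 H2 H3.
set F := [set p | G3 f1 f2 f3 p == v].
set Top := [set p in F | [forall q in F, (q.1 == p.1) ==> (q.2 <= p.2)%N]].
rewrite -(cardsID Top F).
have -> : F :&: Top = Top.
  by apply/setIidPr; apply/subsetP => p; rewrite inE => /andP[].
have FE : forall x y z, ((x, y, z) \in F) -> fmap3 f1 f2 f3 x y z = v.
  by move=> x y z; rewrite inE => /eqP.
apply: leq_add.
- pose h1 (p : 'I_s * 'I_s * 'I_s) : 'I_(2 * s).+1 := inord (p.1.1 + (s - p.1.2)).
  rewrite -(@card_in_imset _ _ h1 Top); first by rewrite -[X in (_ <= X)%N]card_ord max_card.
  move=> [[x y] z] [[x' y'] z'] /setIdP[pF pT] /setIdP[p'F p'T] /(congr1 val).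
  rewrite /h1 /= !inordK; [| have := ltn_ord x; have := ltn_ord x'; lia | have := ltn_ord x; have := ltn_ord x'; lia] => E.
  have [ex ey] := eq_of_sm H1 (congr1 (fun t => t.1.1) (etrans (FE _ _ _ pF) (esym (FE _ _ _ p'F)))) E.
  subst x' y'.
  move/forall_inP: pT => /(_ _ p'F) /=; rewrite eqxx /= => l1.
  move/forall_inP: p'T => /(_ _ pF) /=; rewrite eqxx /= => l2.
  by congr (_, _); apply: val_inj; apply/eqP; rewrite eqn_leq l1 l2.
- pose h2 (p : 'I_s * 'I_s * 'I_s) : 'I_(2 * s).+1 := inord (p.1.1 + (s - p.2)).
  have W : forall x y z, (x, y, z) \in F :\: Top ->
      exists2 w : 'I_s, (z < w)%N & (x, y, w) \in F.
    move=> x y z /setDP[pF]; rewrite inE pF /= => /forall_inPn [[[a b] w] qF].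
    by rewrite negb_imply -ltnNge /= => /andP[/eqP [ea eb] lt]; subst a b; exists w.
  rewrite -(@card_in_imset _ _ h2 (F :\: Top)); first by rewrite -[X in (_ <= X)%N]card_ord max_card.
  move=> [[x y] z] [[x' y'] z'] pD p'D /(congr1 val).
  rewrite /h2 /= !inordK; [| have := ltn_ord x; have := ltn_ord x'; lia | have := ltn_ord x; have := ltn_ord x'; lia] => E.
  have pF : (x, y, z) \in F by move: pD => /setDP[].
  have p'F : (x', y', z') \in F by move: p'D => /setDP[].
  have [ex ez] := eq_of_sm H2 (congr1 (fun t => t.1.2) (etrans (FE _ _ _ pF) (esym (FE _ _ _ p'F)))) E.
  subst x' z'.
  have [w zw wF] := W _ _ _ pD.
  have [w' zw' w'F] := W _ _ _ p'D.
  have e3 := fun a b c a' b' c' (h : (a, b, c) \in F) (h' : (a', b', c') \in F) =>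
     congr1 (fun t => t.2) (etrans (FE _ _ _ h) (esym (FE _ _ _ h'))).
  case: (ltngtP y y') => c.
  + exfalso; exact: (sm_not H3 (e3 _ _ _ _ _ _ pF w'F) c zw').
  + exfalso; exact: (sm_not H3 (e3 _ _ _ _ _ _ p'F wF) c zw).
  + by have -> : y = y' by apply: val_inj.
Qed.

Lemma sumn_const (T : Type) (r : seq T) c : sumn [seq c | _ <- r] = (size r * c)%N.
Proof. by elim: r => //= a r ->; rewrite mulSn. Qed.

Theorem lemma24 (s : nat) (f1 f2 f3 : 'I_s -> 'I_s -> int) :
  (0 < s)%N ->
  strongly_monotone f1 -> strongly_monotone f2 -> strongly_monotone f3 ->
  (s ^ 2 <= 6 * num_values f1 f2 f3)%N.
Proof.
move=> s0 H1 H2 H3.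
rewrite /num_values.
set L := flatten _.
have sz : size L = (s * (s * s))%N.
  rewrite /L size_flatten /shape -map_comp.
  rewrite (eq_map (g := fun _ => (s * s)%N)); last first.
    by move=> x /=; rewrite size_allpairs size_enum_ord.
  by rewrite sumn_const size_enum_ord.
have := @size_le_undup _ L ((2 * s).+1 + (2 * s).+1) (fun v =>
   leq_trans (eq_leq (count_fib f1 f2 f3 v)) (fiber_bound v H1 H2 H3)).
rewrite sz; set N := size _ => h.
nia.
Qed.
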